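(* Let $F_1=F_2=1$, $F_{k+1}=F_k+F_{k-1}$, and let $A=\{F_k : k\ge 1\}=\{1,2,3,5,8,\dots\}$. Then for every $n\ge 1$, $\mathrm{Total}(n,A)=F_{2n+1}-1$.
   Context: For an integer $n\ge 0$ and a set $A$ of positive integers with $1\in A$, the abstract generalized 2048 game $\mathrm{AGG}(n,A)$ is played on $n$ indistinguishable cells. A position assigns to each cell either nothing (empty) or a tile with a value in $A$; the initial position has all cells empty. A step, performable from any position with at least one empty cell, consists of: (i) placing a new tile of value $1$ into a chosen empty cell; then (ii) optionally choosing pairwise disjoint sets of nonempty cells, each with tile-value sum in $A$, and merging each set into a single tile of that sum placed in one of its cells, the other cells of the set becoming empty. The game ends when after a step all cells are nonempty. A position is reachable if obtainable from the initial position by finitely many steps; its total value is the sum of its tile values. $\mathrm{Total}(n,A)$ is the supremum of total values of reachable positions of $\mathrm{AGG}(n,A)$. *)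

(* Defs.v *)
From mathcomp Require Import all_boot.
Set Implicit Arguments. Unset Strict Implicit. Unset Printing Implicit Defensive.

Fixpoint fib (k : nat) : nat :=
  match k with
  | 0 => 0
  | k'.+1 => match k' with 0 => 1 | k''.+1 => fib k' + fib k'' end
  end.

Definition fibSet : nat -> Prop := fun v => exists k, 1 <= k /\ v = fib k.

Definition position (n : nat) := {ffun 'I_n -> option nat}.

Definition val_of (o : option nat) : nat := if o is Some v then v else 0.

Definition total n (p : position n) : nat := \sum_(c < n) val_of (p c).

Definition initial n : position n := [ffun _ => None].

Definition place n (p : position n) (i : 'I_n) : position n :=
  [ffun c => if c == i then Some 1 else p c].

(* Merging: the merge is encoded by a map g sending each nonempty cell to the
   cell of its set where the merged tile is placed (cells not in any chosen set,
   or in singleton sets, are fixed).  The sets are the fibres of g over its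
   fixed points; they are automatically pairwise disjoint. *)
Definition valid_merge n (A : nat -> Prop) (p : position n) (g : 'I_n -> 'I_n)
  : Prop :=
  (forall c, p c = None -> g c = c) /\
  (forall c, g (g c) = g c) /\
  (forall c, g c <> c -> p c <> None /\ p (g c) <> None) /\
  (forall c, g c = c -> p c <> None ->
     A (\sum_(d < n | g d == c) val_of (p d))).

Definition merge_result n (p : position n) (g : 'I_n -> 'I_n) : position n :=
  [ffun c => if (g c == c) && (p c != None)
             then Some (\sum_(d < n | g d == c) val_of (p d))
             else None].

(* One step of AGG(n, A): tiles have values in A (guaranteed since 1 \in A and
   merged sums are required to be in A). *)
Definition step n (A : nat -> Prop) (p q : position n) : Prop :=
  exists i : 'I_n, p i = None /\
  exists g : 'I_n -> 'I_n, valid_merge A (place p i) g /\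
                           q = merge_result (place p i) g.

Inductive reachable n (A : nat -> Prop) : position n -> Prop :=
  | reach_init : reachable A (initial n)
  | reach_step p q : reachable A p -> step A p q -> reachable A q.

Definition Total_is n (A : nat -> Prop) (t : nat) : Prop :=
  (forall p : position n, reachable A p -> total p <= t) /\
  (exists p : position n, reachable A p /\ total p = t).

(* Main.v *)
Require Import Defs.
From mathcomp Require Import all_boot.
From mathcomp Require Import zify.
Set Implicit Arguments. Unset Strict Implicit. Unset Printing Implicit Defensive.

Lemma fibSS m : fib m.+2 = fib m.+1 + fib m.
Proof. by []. Qed.

Lemma fib_pos m : 0 < fib m.+1.
Proof.
elim: m => [//|m IH]. rewrite fibSS. lia.
Qed.

Lemma fib_le_succ m : fib m <= fib m.+1.
Proof. case: m => [//|m]. rewrite fibSS. lia. Qed.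

Lemma fib_mono m k : m <= k -> fib m <= fib k.
Proof.
move=> H. rewrite -(subnKC H). elim: (k - m) => [|d IH]; first by rewrite addn0.
rewrite addnS. exact: leq_trans IH (fib_le_succ _).
Qed.

Lemma fib_gap v m : fibSet v -> v <= fib (2 * m + 1) - 1 -> v <= fib (2 * m).
Proof.
move=> [k [Hk ->]] H.
case: (leqP k (2 * m)) => Hkm; first exact: fib_mono.
have := @fib_mono (2 * m).+1 k Hkm. rewrite addn1 in H. have := fib_pos (2 * m). lia.
Qed.

Definition Inv n (p : position n) : Prop :=
  forall S : {set 'I_n}, 0 < #|S| ->
    exists2 c, c \in S & val_of (p c) <= fib (2 * (n - #|S|).+1).

Lemma inv_tail n (p : position n) : Inv p -> forall k, k <= n ->
  exists T : {set 'I_n}, #|T| = k /\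
    \sum_(c < n | c \notin T) val_of (p c) <= fib (2 * (n - k) + 1) - 1.
Proof.
move=> HI k Hk. rewrite -(subKn Hk). elim: (n - k) (leq_subr k n) => [|m IH] Hm.
  exists setT. rewrite subn0 cardsT card_ord; split=> //.
  rewrite big1 // => c. by rewrite in_setT.
have [T [HT Hs]] := IH (ltnW Hm).
have HT0 : 0 < #|T| by rewrite HT; lia.
have [c Hc Hv] := HI T HT0.
exists (T :\ c). split.
  rewrite (cardsD1 c T) Hc in HT. lia.
rewrite (bigD1 c) /=; last by rewrite !inE eqxx.
rewrite (eq_bigl (fun d => d \notin T)); last first.
  move=> d. rewrite !inE. case: (d =P c) => [->|_] /=; by rewrite ?Hc ?andbT.
rewrite HT subKn ?(ltnW Hm) // in Hv. rewrite subKn ?(ltnW Hm) // in Hs.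
idtac.
have E0 : (n - (n - m.+1)) = m.+1 by lia.
have E : fib (2 * m.+1 + 1) = fib (2 * m.+1) + fib (2 * m + 1).
  have -> : 2 * m.+1 + 1 = (2 * m + 1).+2 by lia.
  rewrite fibSS. have -> : (2 * m + 1).+1 = 2 * m.+1 by lia. by [].
have := fib_pos (2 * m). rewrite addn1 in Hs E *. rewrite E0 E => Hp. apply: leq_trans (leq_add Hv Hs) _. lia.
Qed.

Lemma inv_init n : Inv (initial n).
Proof.
move=> S /card_gt0P [c Hc]. exists c => //. by rewrite ffunE.
Qed.

Lemma inv_place n (p : position n) i : Inv p -> Inv (place p i).
Proof.
move=> HI S HS.
case Hi: (i \in S).
  exists i => //. rewrite ffunE eqxx /=. exact: fib_pos.
have [c Hc Hv] := HI S HS. exists c => //. rewrite ffunE.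
case: eqP => [E|//]. by rewrite -E Hc in Hi.
Qed.

Lemma inv_merge n (p : position n) g :
  Inv p ->
  (forall c, g c = c -> p c <> None ->
     fibSet (\sum_(d < n | g d == c) val_of (p d))) ->
  Inv (merge_result p g).
Proof.
move=> HI HF S HS.
have HSn : #|S| <= n by have := max_card (mem S); rewrite card_ord.
have [T [HT Hs]] := inv_tail HI (leq_trans (leq_subr 1 _) HSn).
have Hnsub : ~~ (S \subset [set g x | x in T]).
  apply/negP=> Hsub. have H := leq_trans (subset_leq_card Hsub) (leq_imset_card g T).
  rewrite HT in H. move: H; apply/negP; rewrite -ltnNge subn1 ltn_predL; exact: HS.
have [c Hc HcT] := subsetPn Hnsub.
exists c => //.
have Hle : \sum_(d < n | g d == c) val_of (p d) <= \sum_(d < n | d \notin T) val_of (p d).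
  rewrite [X in X <= _]big_mkcond [X in _ <= X]big_mkcond /=. apply: leq_sum => d _.
  case: eqP => [Ed|//]. case HdT: (d \in T) => //.
  exfalso. move/negP: HcT; apply. apply/imsetP. by exists d.
have E : n - (#|S| - 1) = (n - #|S|).+1 by lia.
rewrite E in Hs. rewrite ffunE.
case: ifP => [/andP [/eqP Hg Hp]|_ ]; last by [].
apply: fib_gap; first by apply: HF => //; apply/eqP.
exact: leq_trans Hle Hs.
Qed.

Lemma inv_reach n (p : position n) : reachable fibSet p -> Inv p.
Proof.
elim=> [|p0 q _ IH [i [_ [g [[_ [_ [_ H4]]] ->]]]]]; first exact: inv_init.
apply: inv_merge; first exact: inv_place.
exact: H4.
Qed.

Lemma upper n (p : position n) : reachable fibSet p -> Defs.total p <= fib (2 * n + 1) - 1.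
Proof.
move=> /inv_reach HI. have [T [HT Hs]] := inv_tail HI (leq0n n).
rewrite (cards0_eq HT) subn0 in Hs. rewrite /Defs.total.
rewrite (eq_bigl (fun d => d \notin set0)) // => d. by rewrite inE.
Qed.

Definition pos_of n (s : seq nat) : position n :=
  [ffun c : 'I_n => if c < size s then Some (nth 0 s c) else None].

Lemma val_pos n s (c : 'I_n) : val_of (pos_of n s c) = nth 0 s c.
Proof.
rewrite ffunE; case: ifP => // /negbT; rewrite -leqNgt => H. by rewrite nth_default.
Qed.

Lemma pos_none n s (c : 'I_n) : (pos_of n s c = None) <-> size s <= c.
Proof. rewrite ffunE; case: ifP => H; split => //; lia. Qed.

Lemma sum_nth0 (u : seq nat) : \sum_(i < size u) nth 0 u i = sumn u.
Proof.
elim: u => [|x u IH]; first by rewrite big_ord0.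
by rewrite big_ord_recl /= IH.
Qed.

Lemma sum_nth n (u : seq nat) : size u <= n -> \sum_(i < n) nth 0 u i = sumn u.
Proof.
move=> H. rewrite -(subnKC H). elim: (n - size u) => [|m IH].
  by rewrite addn0 sum_nth0.
rewrite addnS big_ord_recr /= IH nth_default ?addn0 //; lia.
Qed.

Lemma total_pos n s : size s <= n -> Defs.total (pos_of n s) = sumn s.
Proof.
move=> H. rewrite /Defs.total (eq_bigr (fun c : 'I_n => nth 0 s c)); first exact: sum_nth.
move=> c _; exact: val_pos.
Qed.

Lemma place_pos n s (Hs : size s < n) :
  place (pos_of n s) (Ordinal Hs) = pos_of n (s ++ [:: 1]).
Proof.
apply/ffunP=> c; rewrite !ffunE size_cat /= addn1 ltnS nth_cat.
case: eqP => [->|Hne] /=; first by rewrite leqnn ltnn subnn.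
have Hne' : (c : nat) != size s.
  apply/eqP=> E; apply: Hne; exact: val_inj.
move: Hne'; case: ifP => H1; case: ifP => H2 //; rewrite ?H1 //; lia.
Qed.

Lemma drop_catl (T : Type) a (s u : seq T) : a <= size s -> drop a (s ++ u) = drop a s ++ u.
Proof.
move=> H; rewrite drop_cat. case: ltnP => H2 //.
have -> : a = size s by lia. by rewrite subnn drop0 drop_size.
Qed.

Definition AllF (s : seq nat) := forall x, x \in s -> fibSet x.

Definition gnf a m x := if (a <= x) && (x <= m) then a else x.
Lemma gnf_in a m x : a <= x -> x <= m -> gnf a m x = a.
Proof. by rewrite /gnf => -> ->. Qed.
Lemma gnf_lo a m x : x < a -> gnf a m x = x.
Proof. rewrite /gnf => H. have -> : (a <= x) = false by lia. by []. Qed.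
Lemma gnf_hi a m x : m < x -> gnf a m x = x.
Proof. rewrite /gnf => H. have -> : (x <= m) = false by lia. by rewrite andbF. Qed.
Lemma gnf_cond a m x : gnf a m x <> x -> a <= x /\ x <= m.
Proof. rewrite /gnf. case: ifP => [/andP [H1 H2] _|_ H] //. Qed.
Lemma gnf_idem a m x : a <= m -> gnf a m (gnf a m x) = gnf a m x.
Proof.
move=> H. case: (ltnP x a) => H1; first by rewrite !gnf_lo.
case: (leqP x m) => H2; first by rewrite !gnf_in.
by rewrite !gnf_hi.
Qed.

Lemma step_pos n s a (Hs : size s < n) : a <= size s -> AllF s ->
  fibSet (sumn (drop a s) + 1) ->
  step fibSet (pos_of n s) (pos_of n (take a s ++ [:: sumn (drop a s) + 1])).
Proof.
move=> Ha HF HS.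
have Han : a < n by apply: leq_ltn_trans Ha Hs.
have gn_lt : forall d : 'I_n, gnf a (size s) d < n.
  move=> d; case: (ltnP d a) => H1; first by rewrite gnf_lo.
  case: (leqP d (size s)) => H2; first by rewrite gnf_in.
  by rewrite gnf_hi.
set g := fun d : 'I_n => Ordinal (gn_lt d).
have gE : forall d c : 'I_n, (g d == c) = (gnf a (size s) d == c) by move=> d c; rewrite -val_eqE.
exists (Ordinal Hs). split; first by rewrite ffunE /= ltnn.
exists g. rewrite place_pos.
set u := s ++ [:: 1].
have hu : size u = (size s).+1 by rewrite size_cat addn1.
have Hsmall : forall c : 'I_n, c < a ->
   \sum_(d < n | g d == c) val_of (pos_of n u d) = nth 0 s c.
  move=> c Hc. rewrite (big_pred1 c).
    rewrite val_pos /u nth_cat. have -> : c < size s by lia. by [].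
  move=> d /=. rewrite gE. case: (ltnP d a) => H1.
    rewrite gnf_lo //. idtac.
  case: (leqP d (size s)) => H2.
    rewrite gnf_in //. have -> : (d == c) = false by apply/negbTE/eqP => E; subst; lia.
    apply/negbTE/eqP; lia.
  rewrite gnf_hi //.
have key : forall x : nat, (if gnf a (size s) x == a then nth 0 u x else 0) = nth 0 (nseq a 0 ++ drop a u) x.
  move=> x. rewrite nth_cat size_nseq nth_drop nth_nseq.
  case: (ltnP x a) => H1.
    by rewrite gnf_lo // (ltn_eqF H1).
  case: (leqP x (size s)) => H2.
    by rewrite gnf_in // eqxx subnKC.
  rewrite gnf_hi //. have -> : (x == a) = false by apply/negbTE/eqP; lia.
  symmetry; apply: nth_default; rewrite hu; lia.
have Hbig : forall c : 'I_n, (c : nat) = a ->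
   \sum_(d < n | g d == c) val_of (pos_of n u d) = sumn (drop a s) + 1.
  move=> c Hc. rewrite big_mkcond /=.
  rewrite (eq_bigr (fun d : 'I_n => nth 0 (nseq a 0 ++ drop a u) d)).
    rewrite sum_nth; last by rewrite size_cat size_nseq size_drop hu; lia.
    by rewrite sumn_cat sumn_nseq /u drop_catl // sumn_cat /= mul0n addn0 add0n.
  move=> d _. rewrite gE val_pos Hc. exact: key.
split.
  split.
    move=> c /pos_none Hc. apply: val_inj => /=. rewrite gnf_hi //. rewrite hu in Hc. lia.
  split.
    move=> c. apply: val_inj => /=. exact: gnf_idem.
  split.
    move=> c Hgc.
    have [H1 H2] : a <= c /\ c <= size s.
      apply: gnf_cond => E. apply: Hgc; exact: val_inj.
    split => /pos_none /=; rewrite hu ?gnf_in //; lia.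
  move=> c Hgc Hne.
  have Hc : c <= size s.
    have : ~ (size u <= c) by move=> H; apply: Hne; apply/pos_none.
    rewrite hu. lia.
  case: (ltnP c a) => Hca; first by rewrite Hsmall //; apply: HF; apply: mem_nth; exact: leq_trans Hca Ha.
  have Hca' : (c : nat) = a.
    case: (ltnP a c) => H; last by apply/eqP; rewrite eqn_leq H Hca.
    exfalso. have E := f_equal val Hgc. rewrite /= gnf_in in E; [by rewrite E ltnn in H | exact: ltnW H | exact: Hc].
  by rewrite Hbig.
apply/ffunP => c. rewrite !ffunE size_cat size_takel // /= addn1 ltnS.
case: (ltnP c a) => Hca.
  have Hgc : g c == c by rewrite gE gnf_lo.
  have Hcu : c < size u by rewrite hu; exact: leq_trans Hca (leq_trans Ha (leqnSn _)).
  rewrite Hgc Hcu /= (ltnW Hca) Hsmall // nth_cat size_takel // Hca nth_take //.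
case: (leqP c a) => Hca2.
  have Hgc : g c == c.
    rewrite gE gnf_in //; last exact: leq_trans Hca2 Ha. apply/eqP; apply/eqP; by rewrite eqn_leq Hca Hca2.
  have Hcu : c < size u by rewrite hu ltnS; apply: leq_trans Hca2 Ha.
  rewrite Hgc Hcu /= Hbig; last by apply/eqP; rewrite eqn_leq Hca Hca2.
  by rewrite nth_cat size_takel // ltnNge Hca /= (eqP Hca2).
case: (leqP c (size s)) => Hcs.
  have Hgc : (g c == c) = false.
    rewrite gE gnf_in ?(ltnW Hca2) //. apply/negbTE/eqP => E. by rewrite E ltnn in Hca2.
  by rewrite Hgc.
have Hcu : (c < size u) = false by rewrite hu ltnS leqNgt Hcs.
by rewrite Hcu andbF.
Qed.

Definition R n s := reachable fibSet (pos_of n s).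

Lemma build n : forall m t a k, 1 <= m -> m <= 2 * k -> size t + k <= n -> a <= size t ->
  AllF t -> fibSet (sumn (drop a t) + fib m) -> R n t ->
  R n (take a t ++ [:: sumn (drop a t) + fib m]).
Proof.
suff H : forall N m, m <= N -> forall t a k, 1 <= m -> m <= 2 * k -> size t + k <= n -> a <= size t ->
  AllF t -> fibSet (sumn (drop a t) + fib m) -> R n t ->
  R n (take a t ++ [:: sumn (drop a t) + fib m]).
  by move=> m; apply: (H m).
elim=> [|N IH] m HmN t a k Hm1 Hmk Hsz Ha HF HS HR; first by lia.
case: m HmN Hm1 Hmk HS => [|[|[|m']]] HmN Hm1 Hmk HS //.
- have Hs : size t < n by lia.
  apply: (reach_step HR). exact: step_pos.
- have Hs : size t < n by lia.
  apply: (reach_step HR). exact: step_pos.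
- have H1 : R n (t ++ [:: fib m'.+2]).
    have := IH m'.+2 ltac:(lia) t (size t) k ltac:(lia) ltac:(lia) Hsz (leqnn _) HF.
    rewrite drop_size take_size /= add0n. apply => //. by exists m'.+2.
  have HF' : AllF (t ++ [:: fib m'.+2]).
    move=> x; rewrite mem_cat => /orP [/HF //|]. rewrite inE => /eqP ->. by exists m'.+2.
  have := IH m'.+1 ltac:(lia) (t ++ [:: fib m'.+2]) a k.-1 ltac:(lia) ltac:(lia)
    ltac:(rewrite size_cat /=; lia) ltac:(rewrite size_cat; lia) HF'.
  rewrite drop_catl // takel_cat // sumn_cat /= addn0 -addnA -fibSS. by apply.
Qed.

Fixpoint fl (j : nat) : seq nat :=
  if j is j'.+1 then fib (2 * j) :: fl j' else [::].

Lemma size_fl j : size (fl j) = j.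
Proof. by elim: j => //= j ->. Qed.

Lemma sumn_fl j : sumn (fl j) = fib (2 * j + 1) - 1.
Proof.
elim: j => // j IH.
have E : fib (2 * j.+1 + 1) = fib (2 * j.+1) + fib (2 * j + 1).
  have -> : 2 * j.+1 + 1 = (2 * j + 1).+2 by lia.
  rewrite fibSS. have -> : (2 * j + 1).+1 = 2 * j.+1 by lia. by [].
have P : 0 < fib (2 * j + 1) by rewrite addn1; exact: fib_pos.
rewrite -[sumn (fl j.+1)]/(fib (2 * j.+1) + sumn (fl j)) IH E. lia.
Qed.

Lemma build_all n : forall j t, AllF t -> size t + j <= n -> R n t -> R n (t ++ fl j).
Proof.
elim=> [|j IH] t HF Hsz HR; first by rewrite cats0.
have Hf : fibSet (fib (2 * j.+1)) by exists (2 * j.+1); split => //; lia.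
have H1 := @build n (2 * j.+1) t (size t) j.+1 ltac:(lia) ltac:(lia) Hsz (leqnn _) HF.
rewrite drop_size take_size add0n in H1.
have H2 := H1 Hf HR.
have HF' : AllF (t ++ [:: fib (2 * j.+1)]).
  move=> x; rewrite mem_cat => /orP [/HF //|]. by rewrite inE => /eqP ->.
have := IH _ HF' ltac:(rewrite size_cat /=; lia) H2.
by rewrite -catA.
Qed.

Theorem mainTheorem12 (n : nat) : 1 <= n ->
  Total_is n fibSet (fib (2 * n + 1) - 1).
Proof.
move=> _. split; first exact: upper.
exists (pos_of n (fl n)). split.
  have := build_all (n := n) (j := n) (t := [::]) ltac:(by []) ltac:(by []).
  rewrite /R /=. apply.
  have -> : pos_of n [::] = initial n by apply/ffunP => c; rewrite !ffunE.
  exact: reach_init.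
by rewrite total_pos ?size_fl // sumn_fl.
Qed.
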